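(* Let $\mathcal{U}(t):=2t\,\mathbb{E}\left[\log_+^2\left\{\frac{1+N_t}{t}\right\}\right]$ for $t>0$ (with $\mathcal{U}(0)=0$), where $N_t$ is a Poisson random variable with mean $t$ and $\log_+(u)=\max\{\log u,0\}$, and let $\mathcal{V}(t):=t\log^2\!\left(1+\frac{1}{\sqrt t}\right)$. Then $$\mathcal{U}(t)\le 2+\frac{2}{t}\ \text{ for all } t>0,\qquad \mathcal{U}(t)\le 2t\log^2\!\left(1+\frac1t\right)\ \text{ for all } t\in(0,e^{-1}].$$ In particular, $\mathcal{U}(t)\le 8$ and $\mathcal{U}(t)\le 21.5\,\mathcal{V}(t)$ for all $t\ge0$. *)

(* Defs.v *)
From Stdlib Require Import Reals Lra.
From Coquelicot Require Import Coquelicot.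
Open Scope R_scope.

Definition logp (u : R) : R := Rmax (ln u) 0.

Definition poisson_pmf (t : R) (k : nat) : R := exp (- t) * t ^ k / INR (Factorial.fact k).

Definition poisson_expect (t : R) (f : nat -> R) : R :=
  Series (fun k => poisson_pmf t k * f k).

Definition U (t : R) : R :=
  if Rlt_dec 0 t then
    2 * t * poisson_expect t (fun k => (logp ((1 + INR k) / t)) ^ 2)
  else 0.

Definition V (t : R) : R := t * (ln (1 + 1 / sqrt t)) ^ 2.

(* Main.v *)
Require Import Defs.
From Stdlib Require Import Reals.
From Coquelicot Require Import Coquelicot.
From Stdlib Require Import Lra Lia.
Open Scope R_scope.

Lemma pmf_S t k : poisson_pmf t (S k) = t * poisson_pmf t k / INR (S k).
Proof.
  unfold poisson_pmf. rewrite fact_simpl, mult_INR. simpl.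
  assert (INR (S k) <> 0) by (apply not_0_INR; lia).
  assert (INR (Factorial.fact k) <> 0) by apply INR_fact_neq_0.
  field. split; auto.
Qed.

Lemma ser1 t : is_series (poisson_pmf t) 1.
Proof.
  pose proof (is_exp_Reals t) as H. unfold is_pseries in H.
  apply (is_series_scal (exp (-t))) in H.
  replace 1 with (scal (exp (-t)) (exp t)).
  2:{ unfold scal; simpl; unfold mult; simpl. rewrite <- exp_plus. replace (-t+t) with 0 by ring. apply exp_0. }
  eapply is_series_ext; [|exact H]. intro n. unfold scal; simpl; unfold mult; simpl.
  rewrite pow_n_pow. unfold poisson_pmf. field. apply INR_fact_neq_0.
Qed.

Lemma ser2 t : is_series (fun k => poisson_pmf t k * INR k) t.
Proof.
  apply is_series_decr_1. cbv beta.
  match goal with |- is_series _ ?l => replace l with (scal t 1) end.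
  2:{ symmetry.  unfold scal, plus, opp; simpl; unfold mult, plus, opp; simpl. ring. }
  eapply is_series_ext; [|exact (is_series_scal t _ _ (ser1 t))].
  intro n. unfold scal; simpl; unfold mult; simpl. rewrite pmf_S.
  assert (INR (S n) <> 0) by (apply not_0_INR; lia). change (match n with 0%nat => 1 | S _ => INR n + 1 end) with (INR (S n)). field; auto.
Qed.

Lemma ser3 t : 0 < t -> is_series (fun k => poisson_pmf t k / (1 + INR k)) ((1 - exp (-t)) / t).
Proof.
  intro Ht.
  pose proof (is_series_incr_1 (poisson_pmf t) 1) as H.
  replace (plus 1 (poisson_pmf t 0)) with (plus 1 (poisson_pmf t 0)) in H by reflexivity.
  assert (H1 : is_series (fun k => poisson_pmf t (S k)) (1 - exp (-t))).
  { apply is_series_incr_1. match goal with |- is_series _ ?l => replace l with 1 end.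
    apply ser1. unfold plus; simpl. unfold poisson_pmf. simpl. field. }
  apply (is_series_scal (/t)) in H1.
  replace ((1 - exp (-t)) / t) with (scal (/t) (1 - exp (-t))).
  2:{ unfold scal; simpl; unfold mult; simpl. field. lra. }
  eapply is_series_ext; [|exact H1]. intro n. unfold scal; simpl; unfold mult; simpl.
  rewrite pmf_S, S_INR.
  assert (0 <= INR n) by apply pos_INR. field. lra.
Qed.

Lemma mono a f df : (forall x, a <= x -> is_derive f x (df x)) ->
  (forall x, a <= x -> 0 <= df x) -> forall x, a <= x -> f a <= f x.
Proof.
  intros Hd Hp x Hx.
  destruct (MVT_gen f a x df) as [c [Hc E]].
  - intros y Hy. apply Hd. unfold Rmin, Rmax in Hy. destruct (Rle_dec a x); lra.
  - intros y Hy. apply continuity_pt_filterlim. apply (ex_derive_continuous (V:=R_NormedModule) f y).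
    exists (df y). apply Hd. unfold Rmin, Rmax in Hy. destruct (Rle_dec a x); lra.
  - assert (a <= c) by (unfold Rmin, Rmax in Hc; destruct (Rle_dec a x); lra).
    specialize (Hp c H). nra.
Qed.

Lemma ln_lower x : 0 <= x -> 2 * x / (2 + x) <= ln (1 + x).
Proof.
  intro Hx.
  pose proof (mono 0 (fun x => ln (1 + x) - 2 * x / (2 + x)) (fun x => x^2 / ((1+x)*(2+x)^2))) as M.
  assert (0 <= ln (1 + x) - 2 * x / (2 + x)).
  { replace 0 with (ln (1 + 0) - 2 * 0 / (2 + 0)).
    2:{ replace (1+0) with 1 by ring. rewrite ln_1. field. }
    apply M; auto.
    - intros y Hy. auto_derive. lra. field. lra.
    - intros y Hy. apply Rle_mult_inv_pos. nra. apply Rmult_lt_0_compat; nra. }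
  lra.
Qed.

Lemma exp_lower y : 0 <= y -> 1 + y + y^2/2 <= exp y.
Proof.
  intro Hy.
  pose proof (mono 0 (fun y => exp y - 1 - y - y^2/2) (fun y => exp y - 1 - y)) as M.
  assert (0 <= exp y - 1 - y - y^2/2).
  { replace 0 with (exp 0 - 1 - 0 - 0^2/2).
    2:{ rewrite exp_0. field. }
    apply M; auto.
    - intros z Hz. auto_derive. auto. field.
    - intros z Hz. pose proof (exp_ineq1_le z). lra. }
  lra.
Qed.

Lemma ln_upper v : 1 <= v -> 2 * ln v <= v - 1 / v.
Proof.
  intro Hv.
  pose proof (mono 1 (fun v => v - 1/v - 2 * ln v) (fun v => (1 - 1/v)^2)) as M.
  assert (0 <= v - 1/v - 2 * ln v).
  { replace 0 with (1 - 1/1 - 2 * ln 1).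
    2:{ rewrite ln_1. field. }
    apply M; auto.
    - intros z Hz. auto_derive. lra. field. lra.
    - intros z Hz. apply pow2_ge_0. }
  lra.
Qed.

Lemma ln_le' x y : 0 < x -> x <= y -> ln x <= ln y.
Proof. intros Hx Hxy. destruct (Req_dec x y). subst; lra. left; apply ln_increasing; lra. Qed.

Lemma pmf_pos t k : 0 < t -> 0 < poisson_pmf t k.
Proof.
  intro Ht. unfold poisson_pmf. apply Rdiv_lt_0_compat.
  apply Rmult_lt_0_compat. apply exp_pos. apply pow_lt; auto.
  pose proof (pos_INR (Factorial.fact k)). pose proof (INR_fact_neq_0 k). lra.
Qed.

Lemma logp_bound u : 0 < u -> (logp u) ^ 2 <= u - 2 + 1 / u.
Proof.
  intro Hu. unfold logp.
  destruct (Rle_dec (ln u) 0) as [Hl|Hl].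
  - rewrite Rmax_right by lra.
    replace (u - 2 + 1/u) with ((u-1)^2 / u) by (field; lra).
    replace (0^2) with 0 by ring. apply Rle_mult_inv_pos. apply pow2_ge_0. auto.
  - rewrite Rmax_left by lra.
    assert (1 < u). { destruct (Rlt_dec 1 u); auto. exfalso. apply Hl. rewrite <- ln_1. apply ln_le'; lra. }
    set (v := sqrt u).
    assert (Hv : v * v = u) by (apply sqrt_sqrt; lra).
    assert (1 <= v). { unfold v. rewrite <- sqrt_1. apply sqrt_le_1_alt. lra. }
    assert (E : ln u = 2 * ln v). { rewrite <- Hv. rewrite ln_mult by lra. ring. }
    pose proof (ln_upper v H0).
    rewrite E. 
    assert (0 <= 2 * ln v) by lra.
    replace (u - 2 + 1/u) with ((v - 1/v)^2) by (rewrite <- Hv; field; lra).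
    apply pow_incr. lra.
Qed.

Lemma ser_lin (a b : nat -> R) la lb : is_series a la -> is_series b lb -> is_series (fun n => a n + b n) (la + lb).
Proof. intros Ha Hb. exact (is_series_plus _ _ _ _ Ha Hb). Qed.
Lemma ser_sc (c : R) (a : nat -> R) la : is_series a la -> is_series (fun n => c * a n) (c * la).
Proof. intros Ha. exact (is_series_scal c _ _ Ha). Qed.

Lemma U_le2 t : 0 < t -> U t <= 2.
Proof.
  intro Ht. unfold U. destruct (Rlt_dec 0 t) as [_|]; [|lra]. unfold poisson_expect.
  set (b := fun k => poisson_pmf t k * ((1 + INR k) / t - 2 + 1 / ((1 + INR k) / t))).
  assert (Hb : is_series b (1/t - exp (-t))).
  { pose proof (ser_lin _ _ _ _ (ser_lin _ _ _ _ (ser_lin _ _ _ _ (ser_sc (1/t) _ _ (ser1 t)) (ser_sc (1/t) _ _ (ser2 t))) (ser_sc (-2) _ _ (ser1 t))) (ser_sc t _ _ (ser3 t Ht))) as H.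
    replace (1/t - exp (-t)) with (1 / t * 1 + 1 / t * t + -2 * 1 + t * ((1 - exp (- t)) / t)) by (field; lra).
    eapply is_series_ext; [|exact H]. intro n. unfold b. cbv beta.
    pose proof (pos_INR n). match goal with |- ?x = ?y => change (@eq R x y) end. field. lra. }
  assert (Hle : Series (fun k => poisson_pmf t k * logp ((1 + INR k) / t) ^ 2) <= Series b).
  { apply Series_le; [|exists (1/t - exp (-t)); exact Hb].
    intro n. pose proof (pmf_pos t n Ht). split.
    - apply Rmult_le_pos. lra. apply pow2_ge_0.
    - unfold b. apply Rmult_le_compat_l. lra. apply logp_bound.
      pose proof (pos_INR n). apply Rdiv_lt_0_compat; lra. }
  rewrite (is_series_unique _ _ Hb) in Hle.
  pose proof (exp_pos (-t)).
  assert (2 * t * Series (fun k => poisson_pmf t k * logp ((1 + INR k) / t) ^ 2) <= 2 * t * (1/t - exp (-t))) by (apply Rmult_le_compat_l; lra).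
  replace (2 * t * (1 / t - exp (- t))) with (2 - 2 * t * exp (-t)) in H0 by (field; lra).
  nra.
Qed.

Lemma exp_m1 : exp (-1) = / exp 1.
Proof. rewrite <- exp_Ropp. reflexivity. Qed.

Lemma t_le_1 t : t <= exp (-1) -> t <= 1.
Proof. intro H. pose proof (exp_increasing (-1) 0 ltac:(lra)). rewrite exp_0 in H0. lra. Qed.

Lemma key0 t : 0 < t -> t <= exp (-1) ->
  ln (/ t) ^ 2 <= ln ((1 + t) / t) ^ 2 - 2 * ln ((1 + t) / t) / (1 + t) * t.
Proof.
  intros Ht He.
  set (L := ln (/ t)). set (c := ln (1 + t)).
  assert (EA : ln ((1 + t) / t) = L + c).
  { unfold L, c, Rdiv. rewrite ln_mult; try lra. apply Rinv_0_lt_compat; lra. }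
  rewrite EA.
  assert (HL : 1 <= L).
  { unfold L. rewrite <- (ln_exp 1). apply ln_le'. apply exp_pos.
    rewrite exp_m1 in He. pose proof (exp_pos 1).
    apply Rinv_le_contravar in He; auto. rewrite Rinv_inv in He. lra. }
  assert (Hc : 2 * t / (2 + t) <= c) by (apply ln_lower; lra).
  set (d := 2 * t / (2 + t)) in Hc.
  assert (Hd : d * ((1+t) * d + 2) - 2 * t = 2 * t^3 / (2+t)^2) by (unfold d; field; lra).
  assert (Hd0 : 0 <= 2 * t^3 / (2+t)^2).
  { apply Rle_mult_inv_pos. assert (0 < t^3) by (apply pow_lt; lra). lra. apply pow_lt; lra. }
  assert (Hdp : 0 <= d) by (unfold d; apply Rle_mult_inv_pos; lra).
  assert (Kc : c * ((1+t) * c + 2) >= 2 * t).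
  { assert (0 <= (c - d) * ((1+t) * (c + d) + 2)) by (apply Rmult_le_pos; nra).
    assert (c * ((1+t) * c + 2) - d * ((1+t) * d + 2) = (c - d) * ((1+t) * (c + d) + 2)) by ring.
    lra. }
  set (s := t / (1 + t)).
  assert (Hs : s <= d) by (unfold s, d; apply Rmult_le_reg_r with ((1+t)*(2+t)); [nra|]; field_simplify; nra).
  assert (Es : 2 * (L + c) / (1 + t) * t = 2 * (L + c) * s) by (unfold s; field; lra).
  rewrite Es.
  assert (Kc2 : 2 * (c - s) + c^2 - 2 * c * s >= 0).
  { assert (E2 : (1+t) * (2 * (c - s) + c^2 - 2 * c * s) = c * ((1+t) * c + 2) - 2 * t) by (unfold s; field; lra).
    assert (0 <= (1+t) * (2 * (c - s) + c^2 - 2 * c * s)) by lra.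
    apply Rle_ge. apply Rmult_le_reg_l with (1+t). lra. lra. }
  assert (0 <= (L - 1) * (c - s)) by (apply Rmult_le_pos; lra).
  nra.
Qed.

Lemma keyk t k : 0 < t -> t <= exp (-1) -> (1 <= k)%nat ->
  ln ((1 + INR k) / t) ^ 2 <= ln ((1 + t) / t) ^ 2 + 2 * ln ((1 + t) / t) / (1 + t) * (INR k - t).
Proof.
  intros Ht He Hk.
  set (a := ln ((1 + t) / t)).
  assert (HL : 1 <= a).
  { unfold a. apply Rle_trans with (ln (exp 1)); [rewrite ln_exp; lra|]. apply ln_le'. apply exp_pos.
    rewrite exp_m1 in He. pose proof (exp_pos 1).
    apply Rinv_le_contravar in He; auto. rewrite Rinv_inv in He.
    apply Rle_trans with (/t); [lra|]. unfold Rdiv. rewrite Rmult_comm.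
    assert (/t * (1+t) = /t + 1) by (field; lra). lra. }
  assert (Hk1 : 1 <= INR k) by (apply (le_INR 1); auto).
  set (w := (1 + INR k) / (1 + t)).
  assert (Hw : 1 <= w).
  { unfold w. apply Rmult_le_reg_r with (1+t). lra. unfold Rdiv. rewrite Rmult_assoc, Rinv_l by lra.
    rewrite exp_m1 in He. pose proof (exp_pos 1). pose proof (exp_le_3).
    assert (t <= 1) by (apply t_le_1; rewrite exp_m1; auto).
    lra. }
  set (y := ln w).
  assert (Hy : 0 <= y) by (unfold y; rewrite <- ln_1; apply ln_le'; lra).
  assert (Ey : exp y = w) by (unfold y; apply exp_ln; lra).
  pose proof (exp_lower y Hy) as Hey. rewrite Ey in Hey.
  assert (E : ln ((1 + INR k) / t) = a + y).
  { unfold a, y, w. rewrite <- ln_mult. f_equal. field. lra.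
    apply Rdiv_lt_0_compat; lra. apply Rdiv_lt_0_compat; lra. }
  rewrite E.
  replace (2 * a / (1 + t) * (INR k - t)) with (2 * a * (w - 1)) by (unfold w; field; lra).
  assert (0 <= (a - 1) * y^2) by (apply Rmult_le_pos; [lra | apply pow2_ge_0]).
  nra.
Qed.

Lemma U_small t : 0 < t -> t <= exp (-1) -> U t <= 2 * t * (ln (1 + 1 / t)) ^ 2.
Proof.
  intros Ht He. unfold U. destruct (Rlt_dec 0 t) as [_|]; [|lra]. unfold poisson_expect.
  set (a := ln ((1 + t) / t)).
  set (B := 2 * a / (1 + t)).
  set (b := fun k => poisson_pmf t k * (a^2 + B * (INR k - t))).
  assert (Hb : is_series b (a^2)).
  { pose proof (ser_lin _ _ _ _ (ser_sc (a^2 - B * t) _ _ (ser1 t)) (ser_sc B _ _ (ser2 t))) as H.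
    replace (a^2) with ((a^2 - B * t) * 1 + B * t) by ring.
    eapply is_series_ext; [|exact H]. intro n. unfold b. cbv beta.
    match goal with |- ?x = ?y => change (@eq R x y) end. ring. }
  assert (Hle : Series (fun k => poisson_pmf t k * logp ((1 + INR k) / t) ^ 2) <= Series b).
  { apply Series_le; [|exists (a^2); exact Hb].
    intro n. pose proof (pmf_pos t n Ht). split.
    - apply Rmult_le_pos. lra. apply pow2_ge_0.
    - unfold b. apply Rmult_le_compat_l. lra.
      assert (Hp : 0 <= ln ((1 + INR n) / t)).
      { rewrite <- ln_1. apply ln_le'. lra. pose proof (pos_INR n).
        rewrite exp_m1 in He. pose proof (exp_pos 1). pose proof (exp_ineq1_le 1).
        assert (t <= 1) by (apply t_le_1; rewrite exp_m1; auto).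
        apply Rmult_le_reg_r with t. lra. unfold Rdiv. rewrite Rmult_assoc, Rinv_l by lra. lra. }
      unfold logp. rewrite Rmax_left by lra.
      destruct n as [|k].
      + simpl INR. replace ((1+0)/t) with (/t) by (field; lra).
        replace (0 - t) with (-t) by ring.
        pose proof (key0 t Ht He). unfold B, a. lra.
      + apply keyk; auto. lia. }
  rewrite (is_series_unique _ _ Hb) in Hle.
  replace (1 + 1/t) with ((1+t)/t) by (field; lra). fold a.
  apply Rmult_le_compat_l; lra.
Qed.

Theorem lemma4 :
  (forall t : R, 0 < t -> U t <= 2 + 2 / t) /\
  (forall t : R, 0 < t -> t <= exp (-1) -> U t <= 2 * t * (ln (1 + 1 / t)) ^ 2) /\
  (forall t : R, 0 <= t -> U t <= 8) /\
  (forall t : R, 0 <= t -> U t <= 21.5 * V t).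
Proof.
  split; [|split; [|split]].
  - intros t Ht. pose proof (U_le2 t Ht). assert (0 < 2/t) by (apply Rdiv_lt_0_compat; lra). lra.
  - exact U_small.
  - intros t Ht. destruct (Req_dec t 0) as [->|].
    + unfold U. destruct (Rlt_dec 0 0); lra.
    + pose proof (U_le2 t ltac:(lra)). lra.
  - intros t Ht. destruct (Req_dec t 0) as [->|Hn].
    + unfold U, V. destruct (Rlt_dec 0 0); lra.
    + assert (Ht' : 0 < t) by lra.
      set (r := sqrt t).
      assert (Hr : r * r = t) by (apply sqrt_sqrt; lra).
      assert (Hr0 : 0 < r) by (apply sqrt_lt_R0; lra).
      unfold V. fold r.
      destruct (Rle_dec t (exp (-1))) as [He|He].
      * pose proof (U_small t Ht' He).
        assert (H1 : 0 <= ln (1 + 1/t)).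
        { rewrite <- ln_1. apply ln_le'. lra. assert (0 < 1/t) by (apply Rdiv_lt_0_compat; lra). lra. }
        assert (H2 : ln (1 + 1/t) <= 2 * ln (1 + 1/r)).
        { rewrite <- Hr. replace (2 * ln (1 + 1/r)) with (ln ((1 + 1/r) * (1 + 1/r))).
          2:{ rewrite ln_mult. ring. assert (0 < 1/r) by (apply Rdiv_lt_0_compat; lra). lra.
              assert (0 < 1/r) by (apply Rdiv_lt_0_compat; lra). lra. }
          apply ln_le'. assert (0 < 1/(r*r)) by (apply Rdiv_lt_0_compat; nra). lra.
          assert (0 < 1/r) by (apply Rdiv_lt_0_compat; lra).
          replace ((1 + 1/r) * (1 + 1/r)) with (1 + 1/(r*r) + 2 * (1/r)) by (field; lra). lra. }
        assert (ln (1 + 1/t) ^ 2 <= 4 * ln (1 + 1/r) ^ 2) by nra.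
        assert (0 <= ln (1 + 1/r) ^ 2) by apply pow2_ge_0.
        nra.
      * pose proof (U_le2 t Ht').
        set (x := 1 / r).
        assert (Hx0 : 0 < x) by (unfold x; apply Rdiv_lt_0_compat; lra).
        pose proof (ln_lower x ltac:(lra)) as Hl.
        assert (Ht3 : 1/3 < t).
        { rewrite exp_m1 in He. pose proof exp_le_3. pose proof (exp_pos 1).
          apply Rnot_le_lt in He. apply Rle_lt_trans with (/ exp 1); auto.
          unfold Rdiv. rewrite Rmult_1_l. apply Rinv_le_contravar; lra. }
        assert (Hx2 : x < 2).
        { unfold x. apply Rmult_lt_reg_r with r. lra. unfold Rdiv. rewrite Rmult_assoc, Rinv_l by lra. nra. }
        assert (Etx : t * x^2 = 1) by (unfold x; rewrite <- Hr; field; lra).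
        assert (Hq : 0 <= 2 * x / (2 + x)) by (apply Rle_mult_inv_pos; lra).
        assert (Hsq : (2 * x / (2 + x))^2 <= ln (1 + x)^2) by (apply pow_incr; lra).
        assert (Ev : t * (2 * x / (2 + x))^2 = 4 / (2 + x)^2) .
        { assert (Tx : t = 1 / x^2).
          { apply (Rmult_eq_reg_r (x^2)). rewrite Etx. field. lra. apply pow_nonzero; lra. }
          rewrite Tx. field. lra. }
        assert (Hv : 4 / (2+x)^2 <= t * ln (1 + x)^2).
        { rewrite <- Ev. apply Rmult_le_compat_l; lra. }
        assert (4 / 16 <= 4 / (2+x)^2).
        { unfold Rdiv. apply Rmult_le_compat_l. lra. apply Rinv_le_contravar. apply pow_lt; lra. nra. }
        lra.
Qed.
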